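(* For every $c,c'\in\mathbb{C}$ we have $|r_{\mathrm{bif}}(c)-r_{\mathrm{bif}}(c')|\le|c-c'|$; that is, $r_{\mathrm{bif}}:\mathbb{C}\to[0,\infty)$ is $1$-Lipschitz.
   Context: $f_c(z)=z^2+c$, extended to $\widehat{\mathbb{C}}$ by $f_c(\infty)=\infty$. For $c\in\mathbb{C}$, $r\ge0$, $G_{c,r}$ is the semigroup under composition generated by $\{f_{c'}:|c'-c|\le r\}$. A minimal set of a polynomial semigroup $G$ is a minimal element, with respect to inclusion, of the family of non-empty compact $L\subset\widehat{\mathbb{C}}$ with $g(L)\subset L$ for all $g\in G$; it is planar if $\infty\notin L$. The bifurcation radius $r_{\mathrm{bif}}(c)$ is the supremum of those $r\ge0$ for which $G_{c,r}$ has a planar minimal set (equivalently the infimum of those $r\ge0$ for which $G_{c,r}$ has no planar minimal set); by prior work this value is attained and $G_{c,r}$ has a planar minimal set iff $r\le r_{\mathrm{bif}}(c)$. *)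

(* Defs.v *)
From HB Require Import structures.
From mathcomp Require Import all_boot all_order all_algebra.
From mathcomp Require Import all_classical all_reals.
From mathcomp Require Import topology normedtype.
From mathcomp Require Import complex.
Import Order.TTheory GRing.Theory Num.Theory.
Import numFieldNormedType.Exports.
Local Open Scope classical_set_scope.
Local Open Scope ring_scope.
Local Open Scope complex_scope.

Set Implicit Arguments.
Unset Strict Implicit.
Unset Printing Implicit Defensive.

(* The complex plane over a real type R is R[i]; the Riemann sphere is its
   one-point compactification (None = infinity). *)
Notation sphere R := (one_point_compactification ((R : realType)[i])^o).

Definition fquad (R : realType) (c : (R[i])^o) (z : sphere R) : sphere R :=
  match z with
  | Some w => Some (w ^+ 2 + c)
  | None => None
  end.

Inductive in_semigroup (X : Type) (gens : set (X -> X)) : (X -> X) -> Prop :=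
  | sg_gen g : gens g -> in_semigroup gens g
  | sg_comp g h : in_semigroup gens g -> in_semigroup gens h ->
                  in_semigroup gens (g \o h).

Definition Gcr (R : realType) (c : R[i]) (r : R) : (sphere R -> sphere R) -> Prop :=
  in_semigroup [set g | exists c' : (R[i])^o, `|c' - c| <= r%:C /\ g = fquad c'].

Definition invariant_compact (R : realType) (G : (sphere R -> sphere R) -> Prop)
  (L : set (sphere R)) : Prop :=
  L !=set0 /\ compact L /\ (forall g, G g -> g @` L `<=` L).

Definition minimal_set (R : realType) (G : (sphere R -> sphere R) -> Prop)
  (L : set (sphere R)) : Prop :=
  invariant_compact G L /\
  (forall L', invariant_compact G L' -> L' `<=` L -> L' = L).

Definition planar (R : realType) (L : set (sphere R)) : Prop := ~ L None.

Definition has_planar_minimal_set (R : realType) (c : R[i]) (r : R) : Prop :=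
  exists L, minimal_set (Gcr c r) L /\ planar L.

Definition rbif (R : realType) (c : R[i]) : R :=
  sup [set r : R | 0 <= r /\ has_planar_minimal_set c r].

(* Main.v *)
Require Import Defs.
From HB Require Import structures.
From mathcomp Require Import all_boot all_order all_algebra.
From mathcomp Require Import all_classical all_reals.
From mathcomp Require Import topology normedtype.
From mathcomp Require Import complex.
From mathcomp Require Import lra.
Import Order.TTheory GRing.Theory Num.Theory.
Import numFieldNormedType.Exports.
Local Open Scope classical_set_scope.
Local Open Scope ring_scope.
Local Open Scope complex_scope.
Set Implicit Arguments.
Unset Strict Implicit.
Lemma preimage_compact (R : realType) (K : set (sphere R)) :
  compact K -> ~ K None -> compact (Some @^-1` K : set ((R[i])^o)).
Proof.
move=> cK nK F PF FW.
have [p [Kp clp]] := cK (Some @ F) _ FW.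
case: p Kp clp => [x|] Kp clp; last by [].
exists x; split => // A B FA Bx.
have FA' : F (Some @^-1` (Some @` A)) by apply: filterS FA => a Aa; exists a.
have [_ [[a Aa <-] [b Bb [eab]]]] := clp _ _ FA' (one_point_compactification_some_nbhs _ _ Bx).
by exists a; split => //; rewrite -eab.
Qed.

Lemma compact_closed_planar (R : realType) (K : set (sphere R)) :
  compact K -> ~ K None -> closed K.
Proof.
move=> cK nK p clp.
have cW := @preimage_compact R K cK nK.
have clW : closed (Some @^-1` K : set ((R[i])^o)) by apply: compact_closed cW; exact: norm_hausdorff.
case: p clp => [x|] clp.
- apply: contrapT => nKx.
  have nx : nbhs x (~` (Some @^-1` K : set ((R[i])^o))).
    by apply: open_nbhs_nbhs; split => //; exact: closed_openC.
  have [q [Kq [z nWz zq]]] := clp _ (one_point_compactification_some_nbhs _ _ nx).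
  by subst q; apply: nWz.
- exfalso.
  have nN : nbhs (None : sphere R) ((Some @` (~` (Some @^-1` K : set ((R[i])^o)))) `|` [set None]).
    by exists (Some @^-1` K : set ((R[i])^o)).
  have [q [Kq [[z nWz zq]|qN]]] := clp _ nN.
  + by subst q; apply: nWz.
  + by rewrite qN in Kq.
Qed.
Lemma exists_minimal_in (R : realType) (G : (sphere R -> sphere R) -> Prop)
  (L : set (sphere R)) :
  invariant_compact G L -> ~ L None -> exists M, minimal_set G M /\ M `<=` L.
Proof.
move=> iL nL.
pose Q := fun K : set (sphere R) => K `<=` L /\ invariant_compact G K.
pose T := {K : set (sphere R) | Q K}.
pose Rl := fun s t : T => `[< sval t `<=` sval s >].
have cl K : Q K -> closed K.
  move=> [KL [_ [cK _]]]; apply: compact_closed_planar cK _.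
  by move=> /KL.
have [t tmin] : exists t : T, forall s, Rl t s -> s = t.
  apply: Zorn.
  - by move=> s; apply/asboolP; exact: subset_refl.
  - move=> r s u /asboolP rs /asboolP su; apply/asboolP; exact: subset_trans su rs.
  - move=> [A QA] [B QB] /asboolP BA /asboolP AB; exact/eq_exist/seteqP.
  - move=> A totA.
    have [[s0 As0]|A0] := pselect (exists s, A s); last first.
      exists (exist _ L (conj (@subset_refl _ L) iL)) => s As.
      by exfalso; apply: A0; exists s.
    pose I := \bigcap_(s in A) sval s.
    have Qs (s : T) : Q (sval s) := svalP s.
    have [_ [ne0 [cpt0 _]]] := Qs s0.
    have QI : Q I.
      split; first by move=> x Ix; exact: (proj1 (Qs s0)) _ (Ix s0 As0).
      split; [|split].
      + have FF : Filter (filter_from A sval).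
          apply: filter_from_filter; first by exists s0.
          move=> i j Ai Aj; have [/asboolP ij|/asboolP ji] := totA i j Ai Aj.
          * by exists j => // x jx; split => //; exact: ij.
          * by exists i => // x ix; split => //; exact: ji.
        have PF : ProperFilter (filter_from A sval).
          apply: filter_from_proper => i _; exact: (proj1 (proj2 (Qs i))).
        have [p [s0p clp]] := cpt0 _ PF (ex_intro2 _ _ s0 As0 (@subset_refl _ _)).
        exists p => s As; apply: (cl _ (Qs s)) => B Bp.
        exact: clp (sval s) B (ex_intro2 _ _ s As (@subset_refl _ _)) Bp.
      + apply: (subclosed_compact _ cpt0); last by move=> x Ix; exact: Ix s0 As0.
        by apply: closed_bigI => s As; exact: cl (Qs s).
      + move=> g Gg _ [x Ix <-] s As.
        have [_ [_ [_ inv]]] := Qs s.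
        by apply: (inv g Gg); exists x => //; exact: Ix s As.
    by exists (exist _ I QI) => s As; apply/asboolP => x Ix; exact: Ix s As.
exists (sval t); split; last exact: (proj1 (svalP t)).
split; first exact: (proj2 (svalP t)).
move=> L' iL' sub.
have QL' : Q L' := conj (subset_trans sub (proj1 (svalP t))) iL'.
have := tmin (exist _ L' QL') (introT (asboolP _) sub).
by move=> /(congr1 sval).
Qed.
Lemma sg_mono (X : Type) (g1 g2 : set (X -> X)) :
  g1 `<=` g2 -> forall g, in_semigroup g1 g -> in_semigroup g2 g.
Proof.
move=> s g; elim => [h /s h2|h k _ IH1 _ IH2]; first exact: sg_gen.
exact: sg_comp.
Qed.

Lemma planar_shift (R : realType) (c c' : R[i]) (r r' : R) :
  has_planar_minimal_set c r ->
  (forall z : R[i], `|z - c'| <= r'%:C -> `|z - c| <= r%:C) ->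
  has_planar_minimal_set c' r'.
Proof.
move=> [L [[iL _] pL]] hz.
have iL' : invariant_compact (Gcr c' r') L.
  have [ne [cp inv]] := iL; split => //; split => // g Gg.
  apply: inv; apply: sg_mono Gg => h [z [hz' ->]].
  by exists z; split => //; exact: hz.
have [M [mM ML]] := @exists_minimal_in R _ L iL' pL.
by exists M; split => // /ML.
Qed.

Lemma dist_shift (R : realType) (c c' z : R[i]) (r : R) :
  `|z - c'| <= (r - complex.Re `|c - c'|)%:C -> `|z - c| <= r%:C.
Proof.
move=> h.
have e : `|c - c'| = (complex.Re `|c - c'|)%:C by rewrite normc_def.
have -> : z - c = (z - c') + (c' - c) by rewrite addrA subrK.
apply: le_trans (ler_normD _ _) _.
rewrite [`|c' - c|]distrC e.
have -> : r%:C = (r - complex.Re `|c - c'|)%:C + (complex.Re `|c - c'|)%:C.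
  by apply/eqP; rewrite eq_complex /= subrK addr0 !eqxx.
exact: lerD.
Qed.
Definition Sb (R : realType) (c : R[i]) := [set r : R | 0 <= r /\ has_planar_minimal_set c r].

Lemma shiftS (R : realType) (c c' : R[i]) (r : R) :
  Sb c r -> complex.Re `|c - c'| <= r -> Sb c' (r - complex.Re `|c - c'|).
Proof.
move=> [r0 hp] dr; split; first by rewrite subr_ge0.
apply: planar_shift hp _ => z; exact: dist_shift.
Qed.

Lemma rbif_ge0 (R : realType) (c : R[i]) : 0 <= rbif c.
Proof.
rewrite /rbif; have [hs|nhs] := pselect (has_sup (Sb c)); last by rewrite sup_out.
have [[r Sr] _] := hs.
apply: le_trans (proj1 Sr) _.
exact: (sup_upper_bound hs Sr).
Qed.

Lemma Re_norm_ge0 (R : realType) (z : R[i]) : 0 <= complex.Re `|z|.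
Proof. by rewrite normc_def /= sqrtr_ge0. Qed.

Lemma half (R : realType) (c c' : R[i]) :
  rbif c <= rbif c' + complex.Re `|c - c'|.
Proof.
set d := complex.Re `|c - c'|.
have d0 : 0 <= d by exact: Re_norm_ge0.
have dd : complex.Re `|c' - c| = d by rewrite distrC.
have g0 := rbif_ge0 c'.
rewrite {1}/rbif; have [hs|nhs] := pselect (has_sup (Sb c)); last first.
  rewrite sup_out //; lra.
apply: ge_sup (proj1 hs) _ => r Sr.
have [rd|dr] := leP r d; first lra.
have S' := shiftS Sr (ltW dr).
have [hs'|nhs'] := pselect (has_sup (Sb c')).
  have := sup_upper_bound hs' S'; rewrite /rbif -/d; lra.
exfalso.
have [M ubM] := proj2 hs.
have M0 : 0 <= M by apply: le_trans (proj1 Sr) (ubM _ Sr).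
have [y Sy My] := (has_supPn (ex_intro _ _ S')).1 nhs' (M + d).
have dy : complex.Re `|c' - c| <= y by rewrite dd; lra.
have := ubM _ (shiftS Sy dy); rewrite dd; lra.
Qed.

Unset Implicit Arguments.
Theorem theorem4p10 (R : realType) (c c' : R[i]) :
  (`|rbif c - rbif c'|)%:C <= `|c - c'|.
Proof.
have h1 := half c c'; have h2 := half c' c.
rewrite distrC in h2.
have e : `|c - c'| = (complex.Re `|c - c'|)%:C by rewrite normc_def.
rewrite e lecR ler_norml; apply/andP; split; lra.
Qed.
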